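(* Let $\varphi,\psi:\mathbb{H}\to\mathbb{H}$ be linear isometries with $\varphi(1)=1$. The algebra $\mathbb{H}\times\mathbb{H}_{(\varphi,\psi)}$ satisfies $(z^2,z^2,z^2)=0$ for all $z$ if and only if (i) $\varphi(\varphi(x)x)=\varphi(x)x$ for all $x\in\mathbb{H}$, (ii) $\varphi(\bar x\psi(x))=\bar x\psi(x)$ for all $x\in\mathbb{H}$, (iii) $\psi(\psi(y)\bar x+y\varphi(x))=\psi(y)\bar x+y\varphi(x)$ for all $x,y\in\mathbb{H}$.
   Context: $(a,b,c)=(ab)c-a(bc)$. On $\mathbb{H}\times\mathbb{H}$ the Cayley–Dickson product is $(x,y)\bullet(u,v)=(xu-\bar v y,\ y\bar u+vx)$. $\mathbb{H}\times\mathbb{H}_{(\varphi,\psi)}$ denotes $\mathbb{H}\times\mathbb{H}$ with product $(x,y)\odot(u,v)=(\varphi(x),\psi(y))\bullet(u,v)$ and norm $\|(x,y)\|^2=|x|^2+|y|^2$; it has left unit $(1,0)$. *)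

(* Defs.v *)
From mathcomp Require Import all_boot all_order all_algebra.
From mathcomp Require Import reals.
Set Implicit Arguments. Unset Strict Implicit. Unset Printing Implicit Defensive.
Import Order.TTheory GRing.Theory Num.Theory.
Local Open Scope ring_scope.

(* Real quaternions H = R^4 with basis 1, i, j, k (Hamilton product). *)
Record quat (R : Type) := Quat { q0 : R; q1 : R; q2 : R; q3 : R }.

Section Quat.
Variable R : realType.
Definition qzero : quat R := Quat 0 0 0 0.
Definition qone : quat R := Quat 1 0 0 0.
Definition qadd (x y : quat R) : quat R :=
  Quat (q0 x + q0 y) (q1 x + q1 y) (q2 x + q2 y) (q3 x + q3 y).
Definition qopp (x : quat R) : quat R := Quat (- q0 x) (- q1 x) (- q2 x) (- q3 x).
Definition qsub (x y : quat R) : quat R := qadd x (qopp y).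
Definition qscale (a : R) (x : quat R) : quat R :=
  Quat (a * q0 x) (a * q1 x) (a * q2 x) (a * q3 x).
Definition qconj (x : quat R) : quat R := Quat (q0 x) (- q1 x) (- q2 x) (- q3 x).
Definition qmul (x y : quat R) : quat R :=
  Quat (q0 x * q0 y - q1 x * q1 y - q2 x * q2 y - q3 x * q3 y)
       (q0 x * q1 y + q1 x * q0 y + q2 x * q3 y - q3 x * q2 y)
       (q0 x * q2 y - q1 x * q3 y + q2 x * q0 y + q3 x * q1 y)
       (q0 x * q3 y + q1 x * q2 y - q2 x * q1 y + q3 x * q0 y).
Definition qnorm (x : quat R) : R :=
  Num.sqrt (q0 x ^+ 2 + q1 x ^+ 2 + q2 x ^+ 2 + q3 x ^+ 2).

Definition qlinear (f : quat R -> quat R) : Prop :=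
  forall (a b : R) (x y : quat R),
    f (qadd (qscale a x) (qscale b y)) = qadd (qscale a (f x)) (qscale b (f y)).
Definition qisometry (f : quat R -> quat R) : Prop :=
  forall x, qnorm (f x) = qnorm x.

(* H x H with the Cayley-Dickson product
   (x,y) . (u,v) = (xu - conj(v) y, y conj(u) + v x) *)
Definition cd_mul (p q : quat R * quat R) : quat R * quat R :=
  (qsub (qmul p.1 q.1) (qmul (qconj q.2) p.2),
   qadd (qmul p.2 (qconj q.1)) (qmul q.2 p.1)).
Definition psub (p q : quat R * quat R) : quat R * quat R :=
  (qsub p.1 q.1, qsub p.2 q.2).

Definition twmul (phi psi : quat R -> quat R) (p q : quat R * quat R) :=
  cd_mul (phi p.1, psi p.2) q.

Definition twassoc phi psi (a b c : quat R * quat R) :=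
  psub (twmul phi psi (twmul phi psi a b) c) (twmul phi psi a (twmul phi psi b c)).

Definition twsq phi psi (z : quat R * quat R) := twmul phi psi z z.
End Quat.

(* Main.v *)
Require Import Defs.
From mathcomp Require Import all_boot all_order all_algebra.
From mathcomp Require Import reals ring lra.
Set Implicit Arguments. Unset Strict Implicit. Unset Printing Implicit Defensive.
Import Order.TTheory GRing.Theory Num.Theory.
Local Open Scope ring_scope.
Section A.
Variable R : realType.
Implicit Types x y : quat R.
Lemma quat_ext x y : q0 x = q0 y -> q1 x = q1 y -> q2 x = q2 y -> q3 x = q3 y -> x = y.
Proof. by case: x => ????; case: y => ???? /= -> -> -> ->. Qed.
Lemma pair_ext (p q : quat R * quat R) : p.1 = q.1 -> p.2 = q.2 -> p = q.
Proof. by case: p; case: q => ???? /= -> ->. Qed.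
Definition projE :=
 (fun x y => (erefl : q0 (qmul x y) = q0 x * q0 y - q1 x * q1 y - q2 x * q2 y - q3 x * q3 y),
  fun x y => (erefl : q1 (qmul x y) = q0 x * q1 y + q1 x * q0 y + q2 x * q3 y - q3 x * q2 y),
  fun x y => (erefl : q2 (qmul x y) = q0 x * q2 y - q1 x * q3 y + q2 x * q0 y + q3 x * q1 y),
  fun x y => (erefl : q3 (qmul x y) = q0 x * q3 y + q1 x * q2 y - q2 x * q1 y + q3 x * q0 y),
  (fun x y => (erefl : q0 (qadd x y) = q0 x + q0 y),
  fun x y => (erefl : q1 (qadd x y) = q1 x + q1 y),
  fun x y => (erefl : q2 (qadd x y) = q2 x + q2 y),
  fun x y => (erefl : q3 (qadd x y) = q3 x + q3 y)),
  (fun x y => (erefl : q0 (qsub x y) = q0 x + - q0 y),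
  fun x y => (erefl : q1 (qsub x y) = q1 x + - q1 y),
  fun x y => (erefl : q2 (qsub x y) = q2 x + - q2 y),
  fun x y => (erefl : q3 (qsub x y) = q3 x + - q3 y)),
  (fun x => (erefl : q0 (qopp x) = - q0 x),
  fun x => (erefl : q1 (qopp x) = - q1 x),
  fun x => (erefl : q2 (qopp x) = - q2 x),
  fun x => (erefl : q3 (qopp x) = - q3 x)),
  (fun x => (erefl : q0 (qconj x) = q0 x),
  fun x => (erefl : q1 (qconj x) = - q1 x),
  fun x => (erefl : q2 (qconj x) = - q2 x),
  fun x => (erefl : q3 (qconj x) = - q3 x)),
  (fun a x => (erefl : q0 (qscale a x) = a * q0 x),
  fun a x => (erefl : q1 (qscale a x) = a * q1 x),
  fun a x => (erefl : q2 (qscale a x) = a * q2 x),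
  fun a x => (erefl : q3 (qscale a x) = a * q3 x))).
Definition pprojE :=
  (fun p q : quat R * quat R => (erefl : (cd_mul p q).1 = qsub (qmul p.1 q.1) (qmul (qconj q.2) p.2)),
   fun p q : quat R * quat R => (erefl : (cd_mul p q).2 = qadd (qmul p.2 (qconj q.1)) (qmul q.2 p.1)),
   fun p q : quat R * quat R => (erefl : (psub p q).1 = qsub p.1 q.1),
   fun p q : quat R * quat R => (erefl : (psub p q).2 = qsub p.2 q.2)).
Ltac qring := apply: pair_ext; rewrite ?pprojE /=; apply: quat_ext; rewrite !projE /=; ring.
Definition sqn x := q0 x ^+ 2 + q1 x ^+ 2 + q2 x ^+ 2 + q3 x ^+ 2.
Lemma sq0 (r s : R) : 0 <= (r - s) ^+ 2. Proof. exact: sqr_ge0. Qed.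
Lemma sqz (r s : R) : (r - s) ^+ 2 <= 0 -> r = s.
Proof. move=> h; apply/eqP; by rewrite -subr_eq0 -sqrf_eq0 eq_le h sqr_ge0. Qed.
Lemma final (a a' b b' : quat R): q0 a' = q0 a -> sqn a' = sqn a -> sqn b' = sqn b ->
  q0 (qsub (qmul a' a) (qmul (qconj b) b')) = q0 (qsub (qmul a' a') (qmul (qconj b') b')) ->
  a' = a /\ b' = b.
Proof.
rewrite !projE /sqn.
case: a => x0 x1 x2 x3; case: a' => y0 y1 y2 y3; case: b => u0 u1 u2 u3; case: b' => v0 v1 v2 v3 /=.
move=> e0 ea eb e.
have S : (y0-x0)^+2 + (y1-x1)^+2 + (y2-x2)^+2 + (y3-x3)^+2 + (v0-u0)^+2 + (v1-u1)^+2 + (v2-u2)^+2 + (v3-u3)^+2 = 0.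
  rewrite e0 in ea e *. lra.
have := sq0 y0 x0; have := sq0 y1 x1; have := sq0 y2 x2; have := sq0 y3 x3.
have := sq0 v0 u0; have := sq0 v1 u1; have := sq0 v2 u2; have := sq0 v3 u3.
move=> *.
by split; congr Quat; apply: sqz; lra.
Qed.
Definition dot x y := q0 x * q0 y + q1 x * q1 y + q2 x * q2 y + q3 x * q3 y.

Lemma L1 (C u w : quat R * quat R) :
  cd_mul (psub C (cd_mul u u)) w = psub (cd_mul C w) (cd_mul u (cd_mul u w)).
Proof. qring. Qed.
Definition cdconj (w : quat R * quat R) := (qconj w.1, qopp w.2).
Lemma L2 (V w : quat R * quat R) :
  (cd_mul (cd_mul V w) (cdconj w)).1 = qscale (sqn w.1 + sqn w.2) V.1.
Proof. rewrite ?pprojE /= /sqn; apply: quat_ext; rewrite !projE /=; ring. Qed.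
Lemma L3 (w : quat R * quat R) : cd_mul (qzero R, qzero R) w = (qzero R, qzero R).
Proof. qring. Qed.
Lemma L4 (w : quat R * quat R) :
  psub (cd_mul (cd_mul w w) w) (cd_mul w (cd_mul w w)) = (qzero R, qzero R).
Proof. qring. Qed.

Section F.
Variable f : quat R -> quat R.
Hypothesis Hl : qlinear f.
Hypothesis Hi : qisometry f.
Lemma fadd x y : f (qadd x y) = qadd (f x) (f y).
Proof.
have e : forall z : quat R, qscale 1 z = z by (move=> z; apply: quat_ext; rewrite !projE /=; ring).
by have := Hl 1 1 x y; rewrite !e.
Qed.
Lemma fscale a x : f (qscale a x) = qscale a (f x).
Proof.
have e : forall u v : quat R, qadd u (qscale 0 v) = u by (move=> u v; apply: quat_ext; rewrite !projE /=; ring).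
by have := Hl a 0 x x; rewrite !e.
Qed.
Lemma f0 : f (qzero R) = qzero R.
Proof.
have e : forall u : quat R, qscale 0 u = qzero R by (move=> u; apply: quat_ext; rewrite !projE /=; ring).
by rewrite -(e (qzero R)) fscale e.
Qed.
Lemma fopp x : f (qopp x) = qopp (f x).
Proof.
have e : forall u : quat R, qopp u = qscale (-1) u by (move=> u; apply: quat_ext; rewrite !projE /=; ring).
by rewrite !e fscale.
Qed.
Lemma fsub x y : f (qsub x y) = qsub (f x) (f y).
Proof. by rewrite /qsub fadd fopp. Qed.
Lemma sqn_ge0 x : 0 <= sqn x.
Proof. by rewrite /sqn !addr_ge0 ?sqr_ge0. Qed.
Lemma fsqn x : sqn (f x) = sqn x.
Proof.
have := Hi x; rewrite /qnorm => e.
by rewrite -[sqn (f x)]sqr_sqrtr ?sqn_ge0 // -[sqn x]sqr_sqrtr ?sqn_ge0 //; congr (_ ^+ 2).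
Qed.
Lemma sqn_add x y : sqn (qadd x y) = sqn x + sqn y + 2 * dot x y.
Proof. rewrite /sqn /dot !projE; ring. Qed.
Lemma fdot x y : dot (f x) (f y) = dot x y.
Proof.
have := fsqn (qadd x y); rewrite fadd !sqn_add !fsqn; lra.
Qed.
Lemma fq0 x : f (qone R) = qone R -> q0 (f x) = q0 x.
Proof.
move=> h; have := fdot x (qone R); rewrite h /dot /=; lra.
Qed.
End F.

Lemma qopp_inj x y : qopp x = qopp y -> x = y.
Proof.
move=> e; apply: quat_ext; have := congr1 (@q0 R) e; have := congr1 (@q1 R) e;
have := congr1 (@q2 R) e; have := congr1 (@q3 R) e; rewrite !projE; move=> *; lra.
Qed.
Lemma sqn0 x : sqn x = 0 -> x = qzero R.
Proof.
case: x => x0 x1 x2 x3; rewrite /sqn /= => e.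
have := sqr_ge0 x0; have := sqr_ge0 x1; have := sqr_ge0 x2; have := sqr_ge0 x3 => *.
congr Quat; apply: (@sqz _ 0); rewrite subr0; lra.
Qed.
End A.


Lemma qsub_z (R : realType) (u : quat R) : qsub u (qmul (qconj (qzero R)) (qzero R)) = u.
Proof. apply: quat_ext; rewrite !projE /=; ring. Qed.
Lemma qsub_z2 (R : realType) (u : quat R) : qsub (qmul (qzero R) (qzero R)) u = qopp u.
Proof. apply: quat_ext; rewrite !projE /=; ring. Qed.

Theorem proposition6 (R : realType) (phi psi : quat R -> quat R) :
  qlinear phi -> qisometry phi -> qlinear psi -> qisometry psi ->
  phi (qone R) = qone R ->
  ((forall z : quat R * quat R,
      twassoc phi psi (twsq phi psi z) (twsq phi psi z) (twsq phi psi z)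
      = (qzero R, qzero R))
   <->
   ((forall x, phi (qmul (phi x) x) = qmul (phi x) x) /\
    (forall x, phi (qmul (qconj x) (psi x)) = qmul (qconj x) (psi x)) /\
    (forall x y, psi (qadd (qmul (psi y) (qconj x)) (qmul y (phi x)))
                 = qadd (qmul (psi y) (qconj x)) (qmul y (phi x))))).
Proof.
move=> lphi iphi lpsi ipsi h1.
have key : forall w, twassoc phi psi w w w = (qzero R, qzero R) -> phi w.1 = w.1 /\ psi w.2 = w.2.
  case=> a b H.
  pose c := cd_mul (phi a, psi b) (a, b).
  pose V := psub (phi c.1, psi c.2) (cd_mul (phi a, psi b) (phi a, psi b)).
  have Hc : cd_mul V (a, b) = (qzero R, qzero R) by rewrite /V L1; exact: H.
  have := L2 V (a, b); rewrite Hc L3 => /(congr1 (@q0 R)).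
  move=> e.
  have e2 : 0 = (sqn a + sqn b) * (q0 (phi c.1) - q0 (qsub (qmul (phi a) (phi a)) (qmul (qconj (psi b)) (psi b)))) by exact: e.
  have hc : q0 (phi c.1) = q0 c.1 := fq0 lphi iphi _ h1.
  case: (eqVneq (sqn a + sqn b) 0) => hN.
    have ha : sqn a = 0 by have := sqn_ge0 a; have := sqn_ge0 b; lra.
    have hb : sqn b = 0 by have := sqn_ge0 a; have := sqn_ge0 b; lra.
    by rewrite /= (sqn0 ha) (sqn0 hb) (f0 lphi) (f0 lpsi).
  move: e2 => /esym /eqP; rewrite mulf_eq0 (negbTE hN) /= subr_eq0 => /eqP e3.
  rewrite hc in e3.
  apply: final => //; [exact: fq0 | exact: fsqn | exact: fsqn].
split.
  move=> H.
  have fx := fun z => key _ (H z).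
  split; [|split].
  - move=> x; have [e _] := fx (x, qzero R).
    have e' : phi (qsub (qmul (phi x) x) (qmul (qconj (qzero R)) (psi (qzero R))))
            = qsub (qmul (phi x) x) (qmul (qconj (qzero R)) (psi (qzero R))) := e.
    by rewrite (f0 lpsi) qsub_z in e'.
  - move=> x; have [e _] := fx (qzero R, x).
    have e' : phi (qsub (qmul (phi (qzero R)) (qzero R)) (qmul (qconj x) (psi x)))
            = qsub (qmul (phi (qzero R)) (qzero R)) (qmul (qconj x) (psi x)) := e.
    rewrite (f0 lphi) qsub_z2 (fopp lphi) in e'.
    exact: qopp_inj.
  - move=> x y; have [_ e] := fx (x, y); exact: e.
case=> hi [hii hiii].
have fixb : forall z, (phi (twsq phi psi z).1, psi (twsq phi psi z).2) = twsq phi psi z.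
  case=> x y; apply: pair_ext.
    change (phi (qsub (qmul (phi x) x) (qmul (qconj y) (psi y))) = qsub (qmul (phi x) x) (qmul (qconj y) (psi y))).
    by rewrite (fsub lphi) hi hii.
  exact: hiii.
move=> z; set w := twsq phi psi z.
have e1 : forall q, twmul phi psi w q = cd_mul w q by move=> q; rewrite /twmul /w fixb.
have e2 : forall q, twmul phi psi (twsq phi psi w) q = cd_mul (twsq phi psi w) q
  by move=> q; rewrite /twmul fixb.
rewrite /twassoc -[twmul phi psi w w]/(twsq phi psi w) e2 e1 /twsq e1.
exact: L4.
Qed.
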